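(* Let $\mathcal{V}$ and $\mathcal{Q}$ be real Hilbert spaces, let $A:\mathcal{V}\times\mathcal{V}\to\mathbb{R}$ and $B:\mathcal{V}\times\mathcal{Q}\to\mathbb{R}$ be bounded bilinear forms, and let $\mathcal{V}_h\subset\mathcal{V}$, $\mathcal{Q}_h\subset\mathcal{Q}$ be finite-dimensional subspaces for which the discrete Babuška–Brezzi conditions hold (so that the discrete saddle point problems below are uniquely solvable for all right-hand sides, and the problem $A(w_h,v_h)=\ell(v_h)$ for all $v_h\in\ker\mathcal{B}_h$, $w_h\in\ker\mathcal{B}_h$, is uniquely solvable for every linear functional $\ell$ on $\ker\mathcal{B}_h$). Let $F\in\mathcal{V}'$, $G\in\mathcal{Q}'$. Let $(u_h,p_h)\in\mathcal{V}_h\times\mathcal{Q}_h$ satisfy $$A(u_h,v_h)+B(v_h,p_h)=F(v_h)\ \ \forall v_h\in\mathcal{V}_h,\qquad B(u_h,q_h)=G(q_h)\ \ \forall q_h\in\mathcal{Q}_h,$$ and for $r\in\mathcal{Q}$ let $(u_{h,r},p_{h,r})\in\mathcal{V}_h\times\mathcal{Q}_h$ satisfy $$A(u_{h,r},v_h)+B(v_h,p_{h,r})=F(v_h)+B(v_h,r)\ \ \forall v_h\in\mathcal{V}_h,\qquad B(u_{h,r},q_h)=G(q_h)\ \ \forall q_h\in\mathcal{Q}_h.$$ Then $$u_{h,r}=u_h\ \text{ for all } r\in\mathcal{Q}\quad\Longleftrightarrow\quad \ker\mathcal{B}_h\subseteq\ker\mathcal{B}.$$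
   Context: $\ker\mathcal{B}:=\{v\in\mathcal{V}: B(v,q)=0\ \forall q\in\mathcal{Q}\}$ and $\ker\mathcal{B}_h:=\{v_h\in\mathcal{V}_h: B(v_h,q_h)=0\ \forall q_h\in\mathcal{Q}_h\}$. The discrete Babuška–Brezzi conditions include the discrete inf-sup condition $\beta_h:=\inf_{q_h\in\mathcal{Q}_h}\sup_{v_h\in\mathcal{V}_h} B(v_h,q_h)/(\|v_h\|_{\mathcal{V}}\|q_h\|_{\mathcal{Q}})>0$ and an invertibility (coercivity/inf-sup) condition for $A$ on $\ker\mathcal{B}_h$. *)

(* Defs.v *)
From HB Require Import structures.
From mathcomp Require Import all_boot all_order all_algebra.
From mathcomp Require Import all_classical all_reals all_analysis.
Set Implicit Arguments. Unset Strict Implicit. Unset Printing Implicit Defensive.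
Import Order.TTheory GRing.Theory Num.Theory.
Import numFieldNormedType.Exports.
Local Open Scope classical_set_scope.
Local Open Scope ring_scope.

Section Defs.
Variable R : realType.

Definition hilbert_ip (V : completeNormedModType R) (ip : V -> V -> R) : Prop :=
  [/\ (forall x y, ip x y = ip y x),
      (forall a x y z, ip (a *: x + y) z = a * ip x z + ip y z) &
      (forall x, `|x| ^+ 2 = ip x x)].

Definition bilinear_form (U W : normedModType R) (A : U -> W -> R) : Prop :=
  (forall a u1 u2 w, A (a *: u1 + u2) w = a * A u1 w + A u2 w) /\
  (forall a u w1 w2, A u (a *: w1 + w2) = a * A u w1 + A u w2).

Definition bounded_bilinear (U W : normedModType R) (A : U -> W -> R) : Prop :=
  bilinear_form A /\ exists C : R, forall u w, `|A u w| <= C * `|u| * `|w|.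

Definition dual_elem (U : normedModType R) (F : U -> R) : Prop :=
  (forall a x y, F (a *: x + y) = a * F x + F y) /\ continuous F.

Definition subspace (U : normedModType R) (S : set U) : Prop :=
  S 0 /\ forall a x y, S x -> S y -> S (a *: x + y).

Definition finite_dim_subspace (U : normedModType R) (S : set U) : Prop :=
  subspace S /\
  exists s : seq U, (forall x, x \in s -> S x) /\
    forall v, S v -> exists c : 'I_(size s) -> R, v = \sum_(i < size s) c i *: s`_i.

Definition kerB (U W : normedModType R) (B : U -> W -> R) : set U :=
  [set v | forall q, B v q = 0].

Definition kerBh (U W : normedModType R) (B : U -> W -> R) (Uh : set U) (Wh : set W)
  : set U := [set v | Uh v /\ forall q, Wh q -> B v q = 0].

Definition infsup (U W : normedModType R) (B : U -> W -> R) (Uh : set U) (Wh : set W)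
  : \bar R :=
  ereal_inf [set ereal_sup [set ((B v q) / (`|v| * `|q|))%:E | v in Uh `\ 0]
            | q in Wh `\ 0].

Definition discrete_BB (V Q : normedModType R) (A : V -> V -> R) (B : V -> Q -> R)
  (Vh : set V) (Qh : set Q) : Prop :=
  (0 < infsup B Vh Qh)%E /\
  (0 < infsup (fun v w => A w v) (kerBh B Vh Qh) (kerBh B Vh Qh))%E.

End Defs.

(* Main.v *)
Require Import Defs.
From HB Require Import structures.
From mathcomp Require Import all_boot all_order all_algebra.
From mathcomp Require Import all_classical all_reals all_analysis.
Import Order.TTheory GRing.Theory Num.Theory.
Import numFieldNormedType.Exports.
Local Open Scope classical_set_scope.
Local Open Scope ring_scope.

Theorem lemma4p2 (R : realType) (V Q : completeNormedModType R)
  (ipV : V -> V -> R) (ipQ : Q -> Q -> R)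
  (hV : hilbert_ip ipV) (hQ : hilbert_ip ipQ)
  (A : V -> V -> R) (B : V -> Q -> R)
  (hA : bounded_bilinear A) (hB : bounded_bilinear B)
  (Vh : set V) (Qh : set Q)
  (hVh : finite_dim_subspace Vh) (hQh : finite_dim_subspace Qh)
  (hBB : discrete_BB A B Vh Qh)
  (F : V -> R) (G : Q -> R) (hF : dual_elem F) (hG : dual_elem G)
  (uh : V) (ph : Q) (huh : Vh uh) (hph : Qh ph)
  (eq1 : forall vh, Vh vh -> A uh vh + B vh ph = F vh)
  (eq2 : forall qh, Qh qh -> B uh qh = G qh)
  (ur : Q -> V) (pr : Q -> Q)
  (hur : forall r, Vh (ur r)) (hpr : forall r, Qh (pr r))
  (eq1r : forall r vh, Vh vh -> A (ur r) vh + B vh (pr r) = F vh + B vh r)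
  (eq2r : forall r qh, Qh qh -> B (ur r) qh = G qh) :
  (forall r, ur r = uh) <-> kerBh B Vh Qh `<=` kerB B.
Proof.
have [[Al Ar] _] := hA; have [[Bl Br] _] := hB.
split.
- move=> H v [Vv Kv] r /=.
  have := eq1r r v Vv; rewrite H (Kv _ (hpr r)) addr0 -(eq1 v Vv) (Kv _ hph) addr0.
  by move=> h; apply/eqP; rewrite -(inj_eq (addrI (A uh v))) addr0 -h.
- move=> Hk r.
  set w := (-1) *: uh + ur r.
  have Vw : Vh w by case: hVh => [[_ Sc] _]; exact: Sc.
  have Kw : kerBh B Vh Qh w.
    split=> // q Qq; rewrite /w Bl eq2r // eq2 //; by rewrite mulN1r addNr.
  have Aw : forall v, kerBh B Vh Qh v -> A w v = 0.
    move=> v [Vv Kv]; have Bz := Hk v (conj Vv Kv).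
    rewrite /w Al; have := eq1r r v Vv; have := eq1 v Vv.
    rewrite (Bz ph) (Bz (pr r)) (Bz r) !addr0 => -> ->.
    by rewrite mulN1r addNr.
  suff w0 : w = 0.
    by move: w0; rewrite /w scaleN1r addrC => /eqP; rewrite subr_eq0 => /eqP.
  apply/eqP; apply: contraT => wn0.
  case: hBB => _ /lt_geF <-.
  apply: le_trans; first apply: ereal_inf_lbound.
    exists w; last reflexivity.
    by split => //= /eqP; rewrite (negbTE wn0).
  apply: ge_ereal_sup => x /= [v [Kv _] <-].
  by rewrite Aw // mul0r.
Qed.
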